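(* Let $P$ be a partial order on $[n]$ which is a disjoint union of chains $c_1,\dots,c_m$ (each $c_r$ totally ordered by $P$, elements of distinct chains incomparable, the $c_r$ partitioning $[n]$), and assign to each chain $c$ a relation $\rho_c\in\{<,>,\le,\ge,=\}$. Call $g\in\widetilde{\mathcal F}_n$ $P$-chain monotone if for every chain $c$ and all $i,j\in c$ with $i<_P j$ one has $g(i)\,\rho_c\,g(j)$. Let $\pi$ be uniform on $\mathrm{PF}_n$ and $f$ uniform on $\widetilde{\mathcal F}_n$. Then $$P\{\pi\text{ is }P\text{-chain monotone}\}=P\{f\text{ is }P\text{-chain monotone}\}.$$ (In particular, with $\rho_c$ equal to $<$ for every chain, $P\{\pi\text{ is }P\text{-monotone}\}=P\{f\text{ is }P\text{-monotone}\}$, where $g$ is $P$-monotone if $i<_Pj$ implies $g(i)<g(j)$.)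
   Context: A parking function of length $n$ is a sequence $(\pi_1,\dots,\pi_n)$ with $1\le\pi_i\le n$ such that $\#\{t:\pi_t\le i\}\ge i$ for all $1\le i\le n$; $\mathrm{PF}_n$ denotes the set of these. $\widetilde{\mathcal F}_n$ is the set of all functions $g:[n]\to[n+1]$, so $\mathrm{PF}_n\subseteq\widetilde{\mathcal F}_n$. *)

(* Defs.v *)
From HB Require Import structures.
From mathcomp Require Import all_boot all_order all_algebra.
Set Implicit Arguments. Unset Strict Implicit. Unset Printing Implicit Defensive.

(* Functions g : [n] -> [n+1] are encoded as {ffun 'I_n -> 'I_n.+1};
   the element i : 'I_n stands for i+1 in [n] and the value k : 'I_n.+1
   stands for k+1 in [n+1]. *)
Definition Ftilde (n : nat) := {ffun 'I_n -> 'I_n.+1}.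

(* parking function: values in [n] and #{t : pi_t <= i} >= i for 1 <= i <= n.
   With 0-based values v = pi_t - 1, "pi_t <= i" is "v < i". *)
Definition is_parking (n : nat) (g : Ftilde n) : bool :=
  [forall t, (g t : nat) < n] &&
  [forall i : 'I_n.+1, (0 < i) ==> (i <= #|[set t | (g t : nat) < i]|)].

Inductive crel := CLt | CGt | CLe | CGe | CEq.

Definition crel_holds (r : crel) (a b : nat) : bool :=
  match r with
  | CLt => a < b | CGt => a > b | CLe => a <= b | CGe => a >= b | CEq => a == b
  end.

(* A poset on [n] which is a disjoint union of chains is given by the list of
   its chains, each chain listed in increasing P-order; the chains partition [n]
   (their concatenation is a duplicate-free enumeration of 'I_n). *)
Definition chain_partition (n : nat) (cs : seq (seq 'I_n)) : Prop :=
  perm_eq (flatten cs) (enum 'I_n).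

Definition chain_lt (n : nat) (c : seq 'I_n) (i j : 'I_n) : bool :=
  [&& i \in c, j \in c & index i c < index j c].

Definition P_lt (n : nat) (cs : seq (seq 'I_n)) (i j : 'I_n) : bool :=
  has (fun c => chain_lt c i j) cs.

Definition chain_monotone (n : nat) (cr : seq (seq 'I_n * crel)) (g : Ftilde n) : bool :=
  all (fun cp => [forall i, forall j,
          chain_lt cp.1 i j ==> crel_holds cp.2 (g i) (g j)]) cr.

Definition unif_prob (T : finType) (A E : {pred T}) : rat :=
  (#|[predI A & E]|%:R / #|A|%:R)%R.

(* Main.v *)
Require Import Defs.
From HB Require Import structures.
From mathcomp Require Import all_boot all_order all_algebra.
From mathcomp Require Import zify.
Set Implicit Arguments. Unset Strict Implicit. Unset Printing Implicit Defensive.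
Import GRing.Theory.

Section Pollak.
Variable n : nat.
Local Notation N := n.+1.

Definition cnt (g : Ftilde n) (x : nat) := #|[set t | (g t : nat) < x]|.
Definition sh (k : 'I_N) (g : Ftilde n) : Ftilde n := [ffun t => (g t + k)%R].

Lemma card_add4 (T : finType) (A B C D : pred T) :
  (forall t, (t \in A) + (t \in B) = (t \in C) + (t \in D)) -> #|A| + #|B| = #|C| + #|D|.
Proof.
move=> H; rewrite -!sum1_card.
rewrite (big_mkcond (mem A)) (big_mkcond (mem B)) (big_mkcond (mem C)) (big_mkcond (mem D)).
rewrite -!big_split /=.
by apply: eq_bigr => t _; have := H t; do 4 case: (_ \in _).
Qed.

Lemma cnt_le g x : cnt g x <= n.
Proof. by rewrite /cnt -[X in _ <= X]card_ord max_card. Qed.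

Lemma cntN g : cnt g N = n.
Proof.
rewrite /cnt -[RHS]card_ord -cardsT; apply: eq_card => t; rewrite !inE.
by case: (g t).
Qed.

Lemma cnt0 g : cnt g 0 = 0.
Proof. by rewrite /cnt; apply/eqP; rewrite cards_eq0; apply/eqP/setP=> t; rewrite !inE. Qed.

Lemma parkingE g : is_parking g <-> (forall j, 0 < j <= n -> j <= cnt g j).
Proof.
rewrite /is_parking; split.
  case/andP=> _ /forallP H j /andP[j0 jn].
  by have := H (@Ordinal N j jn); rewrite /= j0.
move=> H; apply/andP; split; last first.
  apply/forallP => j; apply/implyP=> j0; apply: H; rewrite j0 /=.
  by rewrite -ltnS.
apply/forallP => t.
have nP: 0 < n by apply: leq_ltn_trans (ltn_ord t).
have := H n; rewrite nP leqnn /cnt => /(_ isT) Hc.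
have: [set t | (g t : nat) < n] = setT.
  by apply/eqP; rewrite eqEcard subsetT /= cardsT card_ord.
by move=> E; have := in_setT t; rewrite -E inE.
Qed.

Lemma modNk v k : v < N -> k < N -> (v + k) %% N = if v + k < N then v + k else v + k - N.
Proof.
move=> vN kN; case: ifP => h; first by rewrite modn_small.
have E : v + k = (v + k - N) + N by rewrite subnK // leqNgt h.
by rewrite {1}E modnDr modn_small //; lia.
Qed.

Lemma pt1 v k j : v < N -> k < N -> j <= k ->
  ((v + k) %% N < j) + (v < N - k) = (v < N - k + j) + 0.
Proof.
move=> vN kN jk; rewrite modNk //.
case: ifP => h; case: (ltnP v (N - k)) => h1; case: (ltnP v (N - k + j)) => h2;
 try (case: ltnP => h3); rewrite /= ?addn0 ?add0n //; exfalso; lia.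
Qed.
Lemma pt2 v k j : v < N -> k < N -> k < j -> j <= n ->
  ((v + k) %% N < j) + (v < N - k) = (v < j - k) + 1.
Proof.
move=> vN kN jk jn; rewrite modNk //.
case: ifP => h; case: (ltnP v (N - k)) => h1; case: (ltnP v (j - k)) => h2;
 try (case: ltnP => h3); rewrite /= ?addn0 ?add0n //; exfalso; lia.
Qed.

Lemma cnt_sh g (k : 'I_N) j : j <= n ->
  cnt (sh k g) j + cnt g (N - k) =
  if j <= k then cnt g (N - k + j) else cnt g (j - k) + n.
Proof.
move=> jn; rewrite /cnt; case: ifP => jk.
  rewrite -(addn0 #|[set t | _ < N - k + j]|) -(card0 'I_n).
  apply: card_add4 => t; rewrite !inE.
  by rewrite /sh ffunE; exact: (pt1 (ltn_ord (g t)) (ltn_ord k) jk).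
rewrite -[X in _ = _ + X](card_ord n); apply: card_add4 => t; rewrite !inE ffunE /=.
apply: (pt2 (ltn_ord (g t)) (ltn_ord k) _ jn).
by rewrite ltnNge jk.
Qed.

Definition good g a := (forall x, x < a -> cnt g a + x < cnt g x + a) /\
  (forall x, a < x <= N -> cnt g a + x <= cnt g x + a).

Lemma park_sh g (k : 'I_N) : is_parking (sh k g) <-> good g (N - k).
Proof.
rewrite parkingE; have kN := ltn_ord k.
have CN := cntN g; have C0 := cnt0 g.
split=> [H|[G1 G2] j /andP[j0 jn]].
  split=> [x xa|x /andP[ax xN]].
    case: (posnP x) => [->|x0].
      rewrite C0 addn0; case: (posnP k) => [k0|k0].
        by rewrite k0 subn0 CN.
      have kn : k <= n by rewrite -ltnS.
      have E := cnt_sh g k kn; rewrite leqnn in E.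
      have := H k; rewrite k0 kn => /(_ isT) Hk.
      rewrite subnK in E; last by apply: ltnW.
      lia.
    have jn : x + k <= n by lia.
    have E := cnt_sh g k jn.
    rewrite (_ : x + k <= k = false) in E; last by apply/idP; lia.
    have := H (x + k); rewrite jn andbT (_ : 0 < x + k) //; last by lia.
    move=> /(_ isT) Hj; rewrite addnK in E; lia.
  have jn : x - (N - k) <= n by lia.
  have E := cnt_sh g k jn.
  rewrite (_ : x - (N - k) <= k = true) in E; last by apply/idP; lia.
  have := H (x - (N - k)); rewrite jn andbT (_ : 0 < x - (N - k)) //; last by lia.
  move=> /(_ isT) Hj; rewrite subnKC in E; last by lia.
  lia.
have E := cnt_sh g k jn; case: ifP E => jk E.
  have := G2 (N - k + j); rewrite (_ : N - k < N - k + j <= N) //; last by apply/andP; split; lia.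
  move=> /(_ isT); lia.
have := G1 (j - k); rewrite (_ : j - k < N - k) //; last by lia.
move=> /(_ isT); lia.
Qed.

Lemma good_uniq g a b : b <= N -> a <= N -> good g a -> good g b -> a = b.
Proof.
move=> bN aN [A1 A2] [B1 B2]; case: (ltngtP a b) => // h.
  have := B1 a h; have := A2 b; rewrite h bN => /(_ isT); lia.
have := A1 b h; have := B2 a; rewrite h aN => /(_ isT); lia.
Qed.

Lemma good_ex g : exists2 a, 0 < a <= N & good g a.
Proof.
pose G x := cnt g x + (N - x).
pose P a := (a <= N) && [forall y : 'I_N.+1, G a <= G y].
have exP : exists a, P a.
  case: (@arg_minnP _ (ord0 : 'I_N.+1) xpredT (fun y : 'I_N.+1 => G y) isT) => i _ Hi.
  exists i; rewrite /P -ltnS ltn_ord /=; apply/forallP => y; exact: Hi.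
case: (ex_minnP exP) => a /andP[aN /forallP Ha] Hmin.
have CN := cntN g; have C0 := cnt0 g.
exists a.
  rewrite aN andbT lt0n; apply/eqP => a0.
  have := Ha ord_max; rewrite a0 /G /= C0 CN subnn; lia.
split=> [x xa|x /andP[ax xN]].
  rewrite ltnNge; apply/negP => h.
  have : P x.
    rewrite /P (leq_trans (ltnW xa) aN) /=; apply/forallP => y.
    apply: leq_trans (Ha y); rewrite /G; lia.
  by move/Hmin; rewrite leqNgt xa.
have := Ha (@Ordinal N.+1 x xN); rewrite /G /=; lia.
Qed.

Lemma pollak_ex g : exists k : 'I_N, is_parking (sh k g).
Proof.
case: (good_ex g) => a /andP[a0 aN] Ha.
have kN : N - a < N by lia.
exists (Ordinal kN); apply/park_sh => /=; rewrite subKn //.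
Qed.

Lemma pollak_uniq g (k k' : 'I_N) : is_parking (sh k g) -> is_parking (sh k' g) -> k = k'.
Proof.
move=> /park_sh H /park_sh H'; have := good_uniq (leq_subr _ _) (leq_subr _ _) H H'.
have := ltn_ord k; have := ltn_ord k' => h1 h2 E; apply: val_inj => /=; lia.
Qed.
End Pollak.

Definition crel_eqb (a b : crel) : bool :=
  match a, b with
  | CLt, CLt | CGt, CGt | CLe, CLe | CGe, CGe | CEq, CEq => true
  | _, _ => false end.
Lemma crel_eqP : Equality.axiom crel_eqb.
Proof. by case; case; constructor. Qed.
HB.instance Definition _ := hasDecEq.Build crel crel_eqP.

Lemma card_count n (P : pred 'I_n) : #|[set t | P t]| = count P (enum 'I_n).
Proof. rewrite cardsE cardE -size_filter /enum_mem. congr size.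
rewrite -filter_predI; apply: eq_filter => t /=. by rewrite !unfold_in /= andbT. Qed.

Lemma perm_flat_all (A : Type) (C : eqType) (f g : A -> seq C) (l : seq A) :
  all (fun x => perm_eq (f x) (g x)) l -> perm_eq (flatten (map f l)) (flatten (map g l)).
Proof. by elim: l => //= x l IH /andP[h1 h2]; rewrite perm_cat // IH. Qed.

Fixpoint hval n (l : seq (seq 'I_n * crel)) (ar : crel -> seq 'I_n.+1 -> seq 'I_n.+1)
   (g : Ftilde n) (t : 'I_n) : 'I_n.+1 :=
  match l with
  | [::] => g t
  | cp :: l' => if t \in cp.1 then nth (g t) (ar cp.2 (map g cp.1)) (index t cp.1)
                else hval l' ar g t
  end.

Lemma hval_spec0 n (l : seq (seq 'I_n * crel)) ar g : uniq (flatten (map fst l)) ->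
  all (fun cp => all (fun t => hval l ar g t == nth (g t) (ar cp.2 (map g cp.1)) (index t cp.1)) cp.1) l.
Proof.
elim: l => //= cp l IH; rewrite cat_uniq => /and3P[u1 dis u2].
apply/andP; split; first by apply/allP => t tc; rewrite tc.
apply/allP => cp' cpi; apply/allP => t tc'.
have tnot : t \notin cp.1.
  apply: contra dis => tc; apply/hasP; exists t => //.
  by apply/flattenP; exists cp'.1 => //; apply: map_f.
rewrite (negbTE tnot); exact: (allP (allP (IH u2) cp' cpi) t tc').
Qed.

Section Chains.
Variable n : nat.
Local Notation N := n.+1.
Local Notation T := (Ftilde n).

Definition R (r : crel) : rel 'I_N := fun a b => crel_holds r a b.

Lemma R_anti r : antisymmetric (R r).
Proof.
move=> a b /andP[]; case: r => /= h1 h2; apply: val_inj => /=; try lia.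
Qed.

Lemma mono_chain (c : seq 'I_n) r (g : T) : uniq c ->
  [forall i, forall j, chain_lt c i j ==> R r (g i) (g j)] = pairwise (R r) (map g c).
Proof.
case: c => [|x0 c0] uc.
  by apply/forallP => i; apply/forallP => j; rewrite /chain_lt in_nil.
set c := x0 :: c0 in uc *.
rewrite pairwise_map; apply/idP/idP.
  move=> H; apply/(pairwiseP x0) => i j; rewrite !inE => ic jc ij.
  have := forallP H (nth x0 c i) => /forallP /(_ (nth x0 c j)) /implyP; apply.
  by rewrite /chain_lt !mem_nth // !index_uniq.
move/(pairwiseP x0) => H; apply/forallP => i; apply/forallP => j; apply/implyP.
case/and3P => ic jc ij.
have := H (index i c) (index j c); rewrite !inE !index_mem ic jc !nth_index //.
by move=> /(_ isT isT ij).
Qed.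

Variable cr : seq (seq 'I_n * crel).
Hypothesis hcr : chain_partition (map fst cr).

Lemma uflat : uniq (flatten (map fst cr)).
Proof. by rewrite (perm_uniq hcr) enum_uniq. Qed.

Lemma in_flat t : t \in flatten (map fst cr).
Proof. by rewrite (perm_mem hcr) mem_enum. Qed.

Lemma uchain cp : cp \in cr -> uniq cp.1.
Proof.
move=> H; have := uflat; rewrite (perm_uniq (perm_flatten (perm_to_rem (map_f fst H)))).
by rewrite /= cat_uniq => /andP[].
Qed.

Lemma monoE g : chain_monotone cr g = all (fun cp => pairwise (R cp.2) (map g cp.1)) cr.
Proof.
apply: eq_in_all => cp H; exact: mono_chain (uchain H).
Qed.

Definition eqv (g h : T) := all (fun cp => perm_eq (map g cp.1) (map h cp.1)) cr.

Lemma eqv_refl g : eqv g g.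
Proof. by apply/allP => cp _; exact: perm_refl. Qed.
Lemma eqv_sym g h : eqv g h -> eqv h g.
Proof. by move/allP=> H; apply/allP => cp /H; rewrite perm_sym. Qed.
Lemma eqv_trans g h f : eqv g h -> eqv h f -> eqv g f.
Proof. by move/allP=> H /allP H'; apply/allP => cp cpi; exact: perm_trans (H _ cpi) (H' _ cpi). Qed.

Lemma map_sh (k : 'I_N) (g : T) c : map (sh k g) c = map (fun v => (v + k)%R) (map g c).
Proof. by rewrite -map_comp; apply: eq_map => t; rewrite /sh ffunE. Qed.

Lemma eqv_sh k g h : eqv g h -> eqv (sh k g) (sh k h).
Proof. by move/allP=> H; apply/allP => cp /H P; rewrite !map_sh perm_map. Qed.

Lemma eqv_perm g h : eqv g h -> perm_eq (map g (enum 'I_n)) (map h (enum 'I_n)).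
Proof.
move=> H.
have E f : perm_eq (map f (enum 'I_n)) (flatten (map (fun cp => map f cp.1) cr)).
  have -> : flatten (map (fun cp => map f cp.1) cr) = map f (flatten (map fst cr)).
    by elim: (cr) => //= cp cr' IH; rewrite map_cat IH.
  by rewrite perm_sym; apply: perm_map.
apply: (perm_trans (E _ g)); rewrite perm_sym; apply: (perm_trans (E _ h)).
by rewrite perm_sym; exact: perm_flat_all H.
Qed.

Lemma eqv_cnt g h x : eqv g h -> cnt g x = cnt h x.
Proof.
move/eqv_perm/permP => H; rewrite /cnt !card_count.
have := H (fun v : 'I_N => v < x); rewrite !count_map; exact.
Qed.

Lemma eqv_park g h : eqv g h -> is_parking g -> is_parking h.
Proof.
move=> H /parkingE P; apply/parkingE => j hj; rewrite -(eqv_cnt _ H); exact: P.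
Qed.

Lemma eqv_eq g h : chain_monotone cr g -> chain_monotone cr h -> eqv g h -> g = h.
Proof.
rewrite !monoE => /allP Hg /allP Hh /allP He; apply/ffunP => t.
have /flattenP [c cin tc] := in_flat t.
case/mapP: cin => cp cpi Ec; subst c.
have := pairwise_eq (@R_anti cp.2) (Hg _ cpi) (Hh _ cpi) (He _ cpi).
by move/eq_in_map; apply.
Qed.

Definition lo : rel 'I_N := fun a b => (a:nat) <= b.
Definition arrange r (s : seq 'I_N) :=
  match r with CLt | CLe => sort lo s | CGt | CGe => rev (sort lo s) | CEq => s end.
Definition Qr r (s : seq 'I_N) :=
  match r with CLt | CGt => uniq s | CEq => pairwise (R CEq) s | _ => true end.
Definition Q (g : T) := all (fun cp => Qr cp.2 (map g cp.1)) cr.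

Lemma arrange_perm r s : perm_eq (arrange r s) s.
Proof. by case: r; rewrite /= ?perm_rev ?perm_sort. Qed.

Lemma pairwise_rev' (A : Type) (r : rel A) s :
  pairwise r (rev s) = pairwise (fun x y => r y x) s.
Proof.
elim: s => //= x s IH; rewrite rev_cons pairwise_rcons IH all_rev; congr (_ && _).
Qed.

Lemma sort_lt s : uniq s -> pairwise (R CLt) (sort lo s).
Proof.
move=> us; have -> : R CLt = relpre val ltn by [].
rewrite -pairwise_map -sorted_pairwise; last exact: ltn_trans.
rewrite ltn_sorted_uniq_leq map_inj_uniq ?sort_uniq //; last exact: val_inj.
by rewrite us sorted_map; exact: (@sort_sorted _ lo (fun a b => leq_total a b) s).
Qed.

Lemma sort_le s : pairwise (R CLe) (sort lo s).
Proof.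
rewrite -sorted_pairwise; last by move=> y x z; exact: leq_trans.
exact: (@sort_sorted _ lo (fun a b => leq_total a b) s).
Qed.

Lemma arrange_pair r s : Qr r s -> pairwise (R r) (arrange r s).
Proof.
case: r => /= H.
- exact: sort_lt.
- by rewrite pairwise_rev'; exact: sort_lt.
- exact: sort_le.
- by rewrite pairwise_rev'; exact: sort_le.
- exact: H.
Qed.

Lemma Qr_sh r s (k : 'I_N) : Qr r (map (fun v => (v + k)%R) s) = Qr r s.
Proof.
have inj : injective (fun v : 'I_N => (v + k)%R) by apply: addIr.
case: r => //=; rewrite ?(map_inj_uniq inj) //.
rewrite pairwise_map; apply: eq_pairwise => a b /=.
by rewrite /R /= !val_eqE; exact: (inj_eq inj).
Qed.

Lemma pair_Qr r s : pairwise (R r) s -> Qr r s.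
Proof. by case: r => //= H; apply: (pairwise_uniq _ H) => x; rewrite /R /= ltnn. Qed.

Definition srt g : T := [ffun t => hval cr arrange g t].
Lemma hval_spec g : uniq (flatten (map fst cr)) ->
  all (fun cp => all (fun t => hval cr arrange g t == nth (g t) (arrange cp.2 (map g cp.1)) (index t cp.1)) cp.1) cr.
Proof. exact: hval_spec0. Qed.

Lemma nth_index_map (c : seq 'I_n) (A : seq 'I_N) d : uniq c -> size A = size c ->
  map (fun t => nth (d t) A (index t c)) c = A.
Proof.
case: c => [|x0 c0] uc sA; first by case: A sA.
apply: (@eq_from_nth _ ord0); rewrite size_map // => i ilt.
by rewrite (nth_map x0) // index_uniq // (set_nth_default ord0) // sA.
Qed.

Lemma srt_map cp g : cp \in cr -> map (srt g) cp.1 = arrange cp.2 (map g cp.1).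
Proof.
move=> cpi; have /allP H := allP (hval_spec g uflat) cp cpi.
rewrite -[RHS](nth_index_map g (uchain cpi)); last by rewrite (perm_size (arrange_perm _ _)) size_map.
by apply/eq_in_map => t tc; rewrite ffunE; apply/eqP/H.
Qed.

Lemma srt_eqv g : eqv (srt g) g.
Proof. by apply/allP => cp cpi; rewrite srt_map // arrange_perm. Qed.

Lemma srt_mono g : Q g -> chain_monotone cr (srt g).
Proof.
move/allP=> H; rewrite monoE; apply/allP => cp cpi; rewrite srt_map //.
exact/arrange_pair/H.
Qed.

Lemma mono_Q g : chain_monotone cr g -> Q g.
Proof. by rewrite monoE => /allP H; apply/allP => cp /H; exact: pair_Qr. Qed.

Lemma Q_sh k g : Q g -> Q (sh k g).
Proof. by move/allP=> H; apply/allP => cp /H; rewrite map_sh Qr_sh. Qed.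
End Chains.

Section Count.
Variable n : nat.
Local Notation N := n.+1.
Local Notation T := (Ftilde n).

Lemma sh_add (k k' : 'I_N) (g : T) : sh k (sh k' g) = sh (k' + k)%R g.
Proof. by apply/ffunP => t; rewrite !ffunE addrA. Qed.
Lemma sh0 (g : T) : sh 0%R g = g.
Proof. by apply/ffunP => t; rewrite !ffunE addr0. Qed.
Lemma shK (k : 'I_N) (g : T) : sh (- k)%R (sh k g) = g.
Proof. by rewrite sh_add subrr sh0. Qed.

Variable cr : seq (seq 'I_n * crel).
Hypothesis hcr : chain_partition (map fst cr).

Local Notation M := (chain_monotone cr).

Lemma main_count : #|[pred g : T | is_parking g && M g]| * N = #|[pred g : T | M g]|.
Proof.
pose D := [set x : T * 'I_N | is_parking x.1 && M x.1].
pose Psi (x : T * 'I_N) := srt cr (sh x.2 x.1).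
have cD : #|D| = #|[pred g : T | is_parking g && M g]| * N.
  have -> : D = setX [set g : T | is_parking g && M g] setT.
    by apply/setP => -[g k]; rewrite !inE andbT.
  by rewrite cardsX cardsT card_ord cardsE.
have inj : {in D &, injective Psi}.
  move=> [g k] [g' k']; rewrite !inE /= => /andP[Pg Mg] /andP[Pg' Mg'] E.
  have e1 : eqv cr (sh k g) (sh k' g').
    apply: eqv_trans (eqv_sym (srt_eqv hcr _)) _.
    by rewrite /Psi /= in E; rewrite E; apply: srt_eqv.
  have e2 := eqv_sh (- k')%R e1; rewrite shK sh_add in e2.
  have Pk : is_parking (sh (k + - k')%R g) by apply: eqv_park (eqv_sym e2) Pg'.
  have kk : k = k'.
    have := pollak_uniq Pk (_ : is_parking (sh 0%R g)); rewrite sh0 => /(_ Pg).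
    by move/eqP; rewrite subr_eq0 => /eqP.
  subst k'; have e3 := eqv_sh (- k)%R e1; rewrite !shK in e3.
  by rewrite (eqv_eq hcr Mg Mg' e3).
have img : Psi @: D = [set g : T | M g].
  apply/setP => h; rewrite inE; apply/imsetP/idP.
    case=> -[g k]; rewrite inE /= => /andP[_ Mg] ->.
    exact/(srt_mono hcr)/Q_sh/(mono_Q hcr).
  move=> Mh; case: (pollak_ex h) => k0 Pk0.
  pose g := srt cr (sh k0 h).
  have Mg : M g by apply/(srt_mono hcr)/Q_sh/(mono_Q hcr).
  have Pg : is_parking g by apply: eqv_park (eqv_sym (srt_eqv hcr _)) Pk0.
  exists (g, (- k0)%R); first by rewrite inE /= Pg Mg.
  apply: (eqv_eq hcr Mh); first exact/(srt_mono hcr)/Q_sh/(mono_Q hcr).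
  apply: (eqv_trans (h := sh (- k0)%R g)); last exact: eqv_sym (srt_eqv hcr _).
  rewrite -{1}(shK k0 h); apply: eqv_sh; apply: eqv_sym; exact: srt_eqv.
rewrite -cD -(card_in_imset inj) img; exact: cardsE.
Qed.
End Count.

Unset Implicit Arguments.

Lemma all_mono n (g : Ftilde n) :
  chain_monotone [seq ([:: t], CLe) | t <- enum 'I_n] g.
Proof.
apply/allP => cp /mapP [t _ ->] /=; apply/forallP => i; apply/forallP => j.
rewrite /chain_lt !inE; apply/implyP => /and3P[/eqP -> /eqP -> ].
by rewrite /= eqxx.
Qed.

Theorem theorem10 (n : nat) (cr : seq (seq 'I_n * crel)) :
  chain_partition (map fst cr) ->
  unif_prob (T := Ftilde n) (is_parking (n := n)) (chain_monotone cr) =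
  unif_prob (T := Ftilde n) predT (chain_monotone cr).
Proof.
move=> hcr.
have h0 : chain_partition (map fst [seq ([:: t], CLe) | t <- enum 'I_n]).
  by rewrite /chain_partition -map_comp flatten_seq1.
have E1 := main_count hcr.
have E2 := main_count h0.
rewrite /unif_prob.
have -> : #|[predI is_parking (n:=n) & chain_monotone cr]| =
          #|[pred g : Ftilde n | is_parking g && chain_monotone cr g]|.
  by apply: eq_card.
have -> : #|[predI predT & chain_monotone cr]| =
          #|[pred g : Ftilde n | chain_monotone cr g]|.
  by apply: eq_card.
have -> : #|is_parking (n:=n)| =
          #|[pred g : Ftilde n | is_parking g && chain_monotone [seq ([:: t], CLe) | t <- enum 'I_n] g]|.
  by apply: eq_card => g; rewrite !inE all_mono andbT.
have -> : #|@predT (Ftilde n)| =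
          #|[pred g : Ftilde n | chain_monotone [seq ([:: t], CLe) | t <- enum 'I_n] g]|.
  by apply: eq_card => g; rewrite !inE all_mono.
rewrite -E1 -E2 !natrM invfM mulrACA divff ?mulr1 //.
by rewrite Num.Theory.pnatr_eq0.
Qed.
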